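(* Let $p$ be an odd prime, let $G$ be a quasi-powerful $p$-group and let $H=G^{p}Z(G)$. Then $H$ is powerfully embedded in $G$, i.e. $[H,G]\le H^{p}$.
   Context: For an odd prime $p$, a finite $p$-group $G$ is powerful if $[G,G]\le G^{p}$ (where $G^{p}=\langle g^p\mid g\in G\rangle$), and $G$ is quasi-powerful if $G/Z(G)$ is powerful. A subgroup $N$ of $G$ is powerfully embedded in $G$ if $[N,G]\le N^{p}$. *)

(* Defs.v *)
From mathcomp Require Import all_boot all_fingroup all_solvable.
Set Implicit Arguments. Unset Strict Implicit. Unset Printing Implicit Defensive.
Local Open Scope group_scope.

Definition pow_subgroup (gT : finGroupType) (p : nat) (G : {set gT}) : {set gT} :=
  <<[set x ^+ p | x in G]>>.

Definition powerful (gT : finGroupType) (p : nat) (G : {set gT}) : bool :=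
  [~: G, G] \subset pow_subgroup p G.

Definition quasi_powerful (gT : finGroupType) (p : nat) (G : {group gT}) : bool :=
  powerful p (G / 'Z(G)).

Definition powerfully_embedded (gT : finGroupType) (p : nat) (N G : {set gT}) : bool :=
  [~: N, G] \subset pow_subgroup p N.

(* Main.v *)
Require Import Defs.
From mathcomp Require Import all_boot all_fingroup all_solvable.
Local Open Scope group_scope.

Lemma pow_subgroup_norm (gT : finGroupType) (G : {group gT}) (A : {set gT}) p :
  G \subset 'N(A) -> G \subset 'N(pow_subgroup p A).
Proof.
move=> nAG; rewrite /pow_subgroup norms_gen //.
apply/subsetP => g Gg; rewrite inE; apply/subsetP => _ /imsetP[_ /imsetP[a Aa ->] ->].
by rewrite conjXg; apply: imset_f; rewrite memJ_norm // (subsetP nAG).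
Qed.

Theorem proposition3p6 (gT : finGroupType) (p : nat) (G : {group gT}) :
  prime p -> odd p -> p.-group G -> quasi_powerful p G ->
  powerfully_embedded p (pow_subgroup p G * 'Z(G)) G.
Proof.
move=> pr_p odd_p pG qp.
pose GpG := <<[set x ^+ p | x in G]>>%G.
have GpE : pow_subgroup p G = GpG by [].
rewrite GpE.
have sGpG : GpG \subset G.
  by rewrite gen_subG; apply/subsetP => _ /imsetP[x Gx ->]; rewrite groupX.
have sZG : 'Z(G) \subset G := center_sub G.
have cZG : 'Z(G) \subset 'C(G) := subsetIr G 'C(G).
have nGpG : G \subset 'N(GpG) by rewrite -GpE pow_subgroup_norm ?normG.
have nZG : G \subset 'N('Z(G)) := normal_norm (center_normal G).
have nHG : G \subset 'N(GpG * 'Z(G)) := normsM nGpG nZG.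
have sHG : GpG * 'Z(G) \subset G := mul_subG sGpG sZG.
set H := GpG * 'Z(G) in nHG sHG *.
set N := pow_subgroup p H.
have nNG : G \subset 'N(N) := @pow_subgroup_norm _ G H p nHG.
have powN : forall h, h \in H -> h ^+ p \in N.
  by move=> h Hh; rewrite /N /pow_subgroup mem_gen //; apply: imset_f.
have sG'H : [~: G, G] \subset H.
  have sG'G := der1_subG G.
  have : [~: G, G] / 'Z(G) \subset GpG / 'Z(G).
    rewrite quotientR // (subset_trans qp) // /pow_subgroup gen_subG.
    apply/subsetP => _ /imsetP[u /morphimP[x Nx Gx ->] ->].
    by rewrite -morphX // mem_quotient // mem_gen //; apply: imset_f.
  rewrite quotientSK; last exact: subset_trans sG'G nZG.
  have cZGp : 'Z(G) \subset 'C(GpG) := subset_trans cZG (centS sGpG).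
  by rewrite (centC cZGp).
rewrite /powerfully_embedded -/N.
set M := [~: H, G].
have sMG : M \subset G := subset_trans (commSg G sHG) (der1_subG G).
have nMG : G \subset 'N(M) := normsR nHG (normG G).
have nRG : G \subset 'N([~: M, G]) := normsR nMG (normG G).
set W := [~: M, G] <*> N.
have nWG : G \subset 'N(W) := normsY nRG nNG.
have sNW : N \subset W := joing_subr _ _.
have p_gt2 : 2 < p := odd_prime_gt2 odd_p pr_p.
have [k Ck] : exists k, 'C(p, 2) = (p * k)%N.
  have /dvdnP[k ->] : p %| 'C(p, 2) by apply: prime_dvd_bin => //; rewrite p_gt2.
  by exists k; rewrite mulnC.
have sMW : M \subset W.
  rewrite /M -quotient_cents2; last exact: nWG; last exact: subset_trans sHG nWG.
  have sMWc : M / W \subset 'C(G / W) := quotient_cents2r (joing_subl _ _).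
  rewrite /H quotientMl; last exact: subset_trans sGpG nWG.
  rewrite mul_subG //; last first.
    by apply: quotient_cents2r; move/commG1P: cZG => ->; apply: sub1G.
  rewrite /GpG /= quotient_gen; last first.
    by apply: subset_trans _ nWG; apply/subsetP => _ /imsetP[x Gx ->]; rewrite groupX.
  rewrite gen_subG; apply/subsetP => _ /morphimP[_ _ /imsetP[x Gx ->] ->].
  have Nx : x \in 'N(W) := subsetP nWG x Gx.
  apply/centP => _ /morphimP[y Ny Gy ->].
  rewrite morphX //.
  set X := coset W x; set Y := coset W y.
  set c := [~ X, Y].
  have c_eq : c = coset W [~ x, y] by rewrite /c morphR.
  have Hc : [~ x, y] \in H by apply: (subsetP sG'H); rewrite mem_commg.
  have GWc : c \in G / W by rewrite c_eq mem_quotient // groupR.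
  have GWX : X \in G / W by rewrite mem_quotient.
  have d_eq : [~ c, X] = coset W [~ [~ x, y], x].
    by rewrite !morphR ?groupR.
  have d_cent : [~ c, X] \in 'C(G / W).
    rewrite d_eq; apply: (subsetP sMWc); rewrite mem_quotient // mem_commg //.
  have cp1 : c ^+ p = 1.
    rewrite c_eq -morphX ?groupR ?(subsetP nWG) //; apply: coset_id.
    by rewrite (subsetP sNW) // powN.
  have dp1 : [~ c, X] ^+ p = 1.
    rewrite d_eq -morphX ?groupR ?(subsetP nWG) //; apply: coset_id.
    rewrite (subsetP sNW) // powN //.
    by apply: (subsetP sG'H); rewrite mem_commg // (subsetP sHG).
  apply/commgP/conjg_fixP.
  have -> : X ^+ p ^ Y = (X * c) ^+ p by rewrite conjXg /c /commg mulKVg.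
  rewrite expMg_Rmul; last 2 first.
  - by apply: commute_sym; apply: (centP d_cent).
  - by apply: commute_sym; apply: (centP d_cent).
  by rewrite cp1 mulg1 Ck expgM dp1 expg1n mulg1.
have qMN : M / N \subset [~: M / N, G / N].
  rewrite -quotientR; last exact: nNG; last exact: subset_trans sMG nNG.
  rewrite -(quotientYidr (subset_trans (commSg G sMG) (subset_trans (der1_subG G) nNG))).
  exact: quotientS sMW.
have nNM : M \subset 'N(N) := subset_trans sMG nNG.
rewrite -quotient_sub1 //.
case: (eqVneq (M / N) 1) => [-> // | ntMN].
have := @nil_comm_properl _ (G / N)%G (M / N)%G (G / N) (quotient_nil _ (pgroup_nil pG)).
rewrite quotientS // ntMN subsetI subxx quotient_norms // => /(_ isT isT isT).
by rewrite properE qMN andbF.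
Qed.
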